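(* Let $q$ be an odd prime power, let $f$ be a planar function on $\mathbb F_{q^2}$ and let $\theta=\theta_0+\theta_1\xi\in\mathbb F_{q^2}^*$ ($\theta_0,\theta_1\in\mathbb F_q$). Assume that for every $c\in\mathbb F_q$, \[\#\{x\in\mathbb F_{q^2}:\theta_1 f_0(x)-\theta_0 f_1(x)=c\}=\begin{cases} q+1, & c\neq 0,\\ 1, & c=0.\end{cases}\] Then the set \[\mathcal U_\theta:=\{(x,t\theta):x\in\mathbb F_{q^2},\ t\in\mathbb F_q\}\cup\{(\infty)\}\] is a unital in $\Pi(f)$. Furthermore, for $a,b\in\mathbb F_{q^2}$ with $b=b_0+b_1\xi$ ($b_0,b_1\in\mathbb F_q$), the line $L_{a,b}$ is a tangent line to $\mathcal U_\theta$ if and only if $b_0\theta_1-b_1\theta_0=0$.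
   Context: A function $f:\mathbb F_{q^2}\to\mathbb F_{q^2}$ is planar if for every $a\neq 0$ the map $x\mapsto f(x+a)-f(x)$ is a bijection. For planar $f$, $\Pi(f)$ is the projective plane with points $(x,y)\in\mathbb F_{q^2}^2$ and $(a)$ for $a\in\mathbb F_{q^2}\cup\{\infty\}$, and lines $L_{a,b}=\{(x,f(x+a)-b):x\in\mathbb F_{q^2}\}\cup\{(a)\}$ ($a,b\in\mathbb F_{q^2}$), $N_a=\{(a,y):y\in\mathbb F_{q^2}\}\cup\{(\infty)\}$ ($a\in\mathbb F_{q^2}$), $L_\infty=\{(a):a\in\mathbb F_{q^2}\cup\{\infty\}\}$, with incidence given by membership. A unital in $\Pi(f)$ is a set of $q^3+1$ points meeting every line in exactly $1$ or $q+1$ points; a line meeting it in exactly one point is a tangent line. A fixed element $\xi\in\mathbb F_{q^2}\setminus\mathbb F_q$ is chosen; every $x\in\mathbb F_{q^2}$ is written uniquely as $x=x_0+x_1\xi$ with $x_0,x_1\in\mathbb F_q$, and $f(x)=f_0(x)+f_1(x)\xi$ with $f_0,f_1:\mathbb F_{q^2}\to\mathbb F_q$. *)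

(* Defs.v *)
From mathcomp Require Import all_boot all_order all_algebra all_field.
Set Implicit Arguments. Unset Strict Implicit. Unset Printing Implicit Defensive.
Import GRing.Theory.
Local Open Scope ring_scope.

(* F plays the role of F_{q^2}; the subfield F_q is the set of x with x^q = x. *)
Definition subFq (q : nat) (F : finFieldType) : {set F} := [set x : F | x ^+ q == x].

Definition planar (F : finFieldType) (f : F -> F) : Prop :=
  forall a : F, a != 0 -> bijective (fun x => f (x + a) - f x).

(* Points of Pi(f): inl (x,y) is the affine point (x,y);
   inr (Some a) is the point (a), inr None is the point (infinity). *)
Definition point (F : finFieldType) := ((F * F) + option F)%type.
(* Lines of Pi(f): inl (a,b) is L_{a,b}; inr (Some a) is N_a; inr None is L_infinity. *)
Definition line (F : finFieldType) := ((F * F) + option F)%type.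

Definition incident (F : finFieldType) (f : F -> F) (P : point F) (l : line F) : bool :=
  match l, P with
  | inl (a, b), inl (x, y) => y == f (x + a) - b
  | inl (a, b), inr (Some c) => c == a
  | inl _, inr None => false
  | inr (Some a), inl (x, _) => x == a
  | inr (Some _), inr (Some _) => false
  | inr (Some _), inr None => true
  | inr None, inl _ => false
  | inr None, inr _ => true
  end.

Definition meet (F : finFieldType) (f : F -> F) (U : {set point F}) (l : line F) : {set point F} :=
  [set P in U | incident f P l].

Definition is_unital (F : finFieldType) (f : F -> F) (q : nat) (U : {set point F}) : Prop :=
  #|U| = (q ^ 3).+1 /\
  forall l : line F, #|meet f U l| = 1%N \/ #|meet f U l| = q.+1.

Definition tangent (F : finFieldType) (f : F -> F) (U : {set point F}) (l : line F) : Prop :=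
  #|meet f U l| = 1%N.

Definition U_theta (F : finFieldType) (q : nat) (theta : F) : {set point F} :=
  [set P : point F | match P with
                     | inl (x, y) => [exists t in subFq q F, y == t * theta]
                     | inr None => true
                     | inr (Some _) => false
                     end].

(* Main.v *)
Require Import Defs.
From mathcomp Require Import all_boot all_order all_algebra all_field.
From mathcomp Require Import zify ring.
Import GRing.Theory.
Local Open Scope ring_scope.
Set Implicit Arguments.

Lemma frobq (F : finFieldType) p k : p \in [pchar F] ->
  forall x y : F, (x + y) ^+ (p ^ k) = x ^+ (p ^ k) + y ^+ (p ^ k).
Proof.
move=> Hp x y; elim: k => [|k IH]; first by rewrite !expn0 !expr1.
rewrite expnSr !exprM IH.
by rewrite -!(pFrobenius_autE Hp) pFrobenius_autD_comm //; apply: mulrC.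
Qed.

Section S.
Variables (q : nat) (F : finFieldType).
Hypothesis Hadd : forall x y : F, (x + y) ^+ q = x ^+ q + y ^+ q.
Hypothesis Hq0 : (0 < q)%N.
Local Notation S := (subFq q F).

Lemma inS x : (x \in S) = (x ^+ q == x).
Proof. by rewrite inE. Qed.

Lemma S0 : (0 : F) \in S.
Proof. by rewrite inS expr0n (negPf (lt0n_neq0 Hq0)). Qed.
Lemma S1 : (1 : F) \in S.
Proof. by rewrite inS expr1n. Qed.
Lemma SD x y : x \in S -> y \in S -> x + y \in S.
Proof. by rewrite !inS Hadd => /eqP-> /eqP->. Qed.
Lemma SB x y : x \in S -> y \in S -> x - y \in S.
Proof.
rewrite !inS => /eqP Hx /eqP Hy.
have := Hadd (x - y) y; rewrite subrK Hx Hy => E.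
by apply/eqP; apply: (addIr y); rewrite subrK -E.
Qed.
Lemma SM x y : x \in S -> y \in S -> x * y \in S.
Proof. by rewrite !inS exprMn => /eqP-> /eqP->. Qed.
Lemma SV x : x \in S -> x^-1 \in S.
Proof. by rewrite !inS exprVn => /eqP->. Qed.

Variable xi : F.
Hypothesis Hxi : xi \notin S.
Lemma decomp_uniq y0 y1 z0 z1 : y0 \in S -> y1 \in S -> z0 \in S -> z1 \in S ->
  y0 + y1 * xi = z0 + z1 * xi -> y0 = z0 /\ y1 = z1.
Proof.
move=> H1 H2 H3 H4 E.
have E1 : y1 = z1.
  apply/eqP; apply: contraNT Hxi => Hne.
  have Hne' : y1 - z1 != 0 by rewrite subr_eq0.
  have -> : xi = (z0 - y0) / (y1 - z1).
    apply: (mulIf Hne'); rewrite divfK //.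
    apply/eqP; rewrite -subr_eq0; apply/eqP.
    by transitivity ((y0 + y1*xi) - (z0+z1*xi)); [ring | rewrite E subrr].
  by apply: SM; [apply: SB|apply: SV; apply: SB].
by split=> //; move: E; rewrite E1 => /addIr.
Qed.
End S.
Theorem proposition2p2 (q : nat) (F : finFieldType)
  (Hq : exists p k : nat, [/\ prime p, (0 < k)%N & q = (p ^ k)%N])
  (Hodd : odd q) (HF : #|F| = (q ^ 2)%N)
  (xi : F) (Hxi : xi \notin subFq q F)
  (f f0 f1 : F -> F) (Hplanar : planar f)
  (Hf0 : forall x, f0 x \in subFq q F) (Hf1 : forall x, f1 x \in subFq q F)
  (Hf : forall x, f x = f0 x + f1 x * xi)
  (theta theta0 theta1 : F) (Htheta : theta != 0)
  (Ht0 : theta0 \in subFq q F) (Ht1 : theta1 \in subFq q F)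
  (Htheta_dec : theta = theta0 + theta1 * xi)
  (Hcount : forall c, c \in subFq q F ->
     #|[set x : F | theta1 * f0 x - theta0 * f1 x == c]| =
       (if c != 0 then q.+1 else 1%N)) :
  is_unital f q (U_theta q theta) /\
  (forall a b b0 b1 : F, b0 \in subFq q F -> b1 \in subFq q F -> b = b0 + b1 * xi ->
     (tangent f (U_theta q theta) (inl (a, b)) <-> b0 * theta1 - b1 * theta0 = 0)).
Proof.
have [p [k [pr_p k0 qE]]] := Hq.
have Hp : p \in [pchar F].
  by apply: (@card_finPcharP F p (k * 2)) => //; rewrite HF qE expnM.
have Hadd : forall x y : F, (x + y) ^+ q = x ^+ q + y ^+ q by rewrite qE; exact: frobq.
have Hq0 : (0 < q)%N by case: (q) Hodd.
pose S := subFq q F.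
pose g x := theta1 * f0 x - theta0 * f1 x.
have gS x : g x \in S by apply: SB => //; apply: SM.
have cardS : #|S| = q.
  have E1 : #|F| = (\sum_(c in S) #|[set x : F | g x == c]|)%N.
    rewrite -sum1_card (partition_big g (fun c => c \in S)) //=.
    apply: eq_bigr => c _; rewrite -sum1_card; apply: eq_bigl => x.
    by rewrite !inE.
  move: E1; rewrite (eq_bigr (fun c => if c != 0 then q.+1 else 1%N)); last first.
    by move=> c Hc; apply: Hcount.
  rewrite (big_setD1 0) ?S0 //= eqxx /=.
  rewrite (eq_bigr (fun _ => q.+1)); last by move=> c; rewrite !inE => /andP[->].
  rewrite sum_nat_const HF => E.
  rewrite (cardsD1 0) S0 //=.
  move: E; set m := #|_|; move=> E; nia.
pose d (u : F * F) := u.1 + u.2 * xi.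
have Hdec : forall b : F, exists b0 b1, [/\ b0 \in S, b1 \in S & b = b0 + b1 * xi].
  have dinj : {in setX S S &, injective d}.
    move=> [u1 u2] [v1 v2]; rewrite !in_setX /= => /andP[H1 H2] /andP[H3 H4] E.
    by have [-> ->] := decomp_uniq Hadd xi Hxi H1 H2 H3 H4 E.
  have Himg : d @: setX S S = [set: F].
    apply/eqP; rewrite eqEcard subsetT /= cardsT (card_in_imset dinj) cardsX cardS HF.
    by rewrite expnS expn1.
  move=> b; have : b \in d @: setX S S by rewrite Himg inE.
  case/imsetP => [[u1 u2]]; rewrite in_setX /= => /andP[H1 H2] ->.
  by exists u1, u2.
have memU : forall y y0 y1, y0 \in S -> y1 \in S -> y = y0 + y1 * xi ->
    [exists t in S, y == t * theta] = (theta1 * y0 - theta0 * y1 == 0).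
  move=> y y0 y1 H0 H1 ->; apply/existsP/idP.
    case=> t /andP[tS /eqP E].
    move: E; rewrite Htheta_dec mulrDr mulrA => E.
    have [-> ->] := decomp_uniq Hadd xi Hxi H0 H1 (SM tS Ht0) (SM tS Ht1) E.
    by apply/eqP; ring.
  move=> /eqP E.
  have [t1z|t1nz] := eqVneq theta1 0.
    have t0nz : theta0 != 0.
      by apply: contraNneq Htheta => t0z; rewrite Htheta_dec t0z t1z mul0r addr0.
    move: E; rewrite t1z mul0r sub0r => /eqP; rewrite oppr_eq0 mulf_eq0 (negPf t0nz) /= => /eqP y1z.
    exists (y0 / theta0); rewrite SM ?SV //=.
    by rewrite Htheta_dec t1z y1z !mul0r !addr0 divfK.
  exists (y1 / theta1); rewrite SM ?SV //=.
  have Ey0 : y0 = theta0 * y1 / theta1.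
    have E' : theta1 * y0 = theta0 * y1 by apply/eqP; rewrite -subr_eq0 E.
    by rewrite -E' mulrC mulKf.
  by apply/eqP; rewrite Htheta_dec Ey0; field.
pose h (u : F * F) : point F := inl (u.1, u.2 * theta).
have hinj : injective h.
  move=> [u1 u2] [v1 v2] [/= -> E]; congr pair; exact: (mulIf Htheta E).
have HU : U_theta q theta = inr None |: (h @: setX [set: F] S).
  apply/setP => [[[x y]|[c|]]]; rewrite !inE /=.
  - apply/existsP/imsetP.
      case=> t /andP[tS /eqP ->]; exists (x, t) => //.
      by rewrite in_setX inE tS.
    case=> [[u1 u2]]; rewrite in_setX /= => /andP[_ Hu2] [_ ->].
    by exists u2; rewrite Hu2 eqxx.
  - by apply/esym/imsetP => [[u _]].
  - by [].
have cardU : #|U_theta q theta| = (q ^ 3).+1.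
  rewrite HU cardsU1 (card_imset _ hinj) cardsX cardsT cardS HF.
  have -> : (inr None \in h @: setX [set: F] S) = false.
    by apply/imsetP => [[u _]].
  by rewrite add1n expnS mulnC.
have meetAB : forall a b b0 b1, b0 \in S -> b1 \in S -> b = b0 + b1 * xi ->
    #|meet f (U_theta q theta) (inl (a, b))| = #|[set x | g x == theta1 * b0 - theta0 * b1]|.
  move=> a b b0 b1 H0 H1 Hb.
  set c := theta1 * b0 - theta0 * b1.
  have cond : forall x, [exists t in S, f (x + a) - b == t * theta] = (g (x + a) == c).
    move=> x; rewrite (memU _ (f0 (x + a) - b0) (f1 (x + a) - b1)) ?SB //; last first.
      by rewrite Hf Hb; ring.
    have -> : theta1 * (f0 (x + a) - b0) - theta0 * (f1 (x + a) - b1) = g (x + a) - c.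
      by rewrite /g /c; ring.
    by rewrite subr_eq0.
  pose kk (x : F) : point F := inl (x, f (x + a) - b).
  have kinj : injective kk by move=> x1 x2 [].
  have E : meet f (U_theta q theta) (inl (a, b)) = kk @: [set x | g (x + a) == c].
    apply/setP => [[[x y]|[e|]]]; rewrite !inE /=.
    - apply/andP/imsetP.
        case=> HyU /eqP Hy; exists x => //; last by rewrite /kk Hy.
        by rewrite inE -cond -Hy.
      case=> x' Hx' [-> ->]; split => //.
      by rewrite cond; rewrite inE in Hx'.
    - by apply/esym/imsetP => [[u _]].
    - by apply/esym/imsetP => [[u _]].
  rewrite E (card_imset _ kinj).
  have -> : [set x | g (x + a) == c] = (fun x => x - a) @: [set x | g x == c].
    apply/setP => x; rewrite inE; apply/idP/imsetP.
      by move=> Hx; exists (x + a); rewrite ?inE ?addrK.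
    by case=> y Hy ->; rewrite subrK; rewrite inE in Hy.
  by rewrite (card_imset _ (addIr (- a))).
split.
  split => // -[[a b]|[a|]].
  - have [b0 [b1 [H0 H1 Hb]]] := Hdec b.
    rewrite (meetAB a b b0 b1) // Hcount ?SB ?SM //.
    by case: ifP; [right|left].
  - right.
    have -> : meet f (U_theta q theta) (inr (Some a)) =
        inr None |: ((fun t => inl (a, t * theta) : point F) @: S).
      apply/setP => [[[x y]|[e|]]]; rewrite !inE /=.
      + apply/andP/imsetP.
          case=> /existsP[t /andP[tS /eqP ->]] /eqP ->; by exists t.
        case=> t tS [-> ->]; split => //.
        by apply/existsP; exists t; rewrite tS eqxx.
      + by apply/esym/imsetP => [[u _]].
      + by [].
    have tinj : injective (fun t => inl (a, t * theta) : point F).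
      by move=> t1 t2 [/(mulIf Htheta)].
    rewrite cardsU1 (card_imset _ tinj) cardS.
    have -> : (inr None \in (fun t => inl (a, t * theta) : point F) @: S) = false.
      by apply/imsetP => [[u _]].
    by [].
  - left.
    have -> : meet f (U_theta q theta) (inr None) = [set inr None].
      apply/setP => [[[x y]|[e|]]]; rewrite !inE /= ?andbF //.
    by rewrite cards1.
move=> a b b0 b1 H0 H1 Hb; rewrite /tangent (meetAB a b b0 b1) // Hcount; last first.
  by rewrite ?SB ?SM.
have -> : b0 * theta1 - b1 * theta0 = theta1 * b0 - theta0 * b1 by rewrite mulrC (mulrC b1).
have [->|nz] := eqVneq (theta1 * b0 - theta0 * b1) 0; first by [].
rewrite /=; split => [[q0]|/eqP]; [by move: Hq0; rewrite q0 | by rewrite (negPf nz)].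
Qed.
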